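(* Let $q_0>0$, $\alpha\in\mathbb{R}$, $\theta_+\in(0,\pi)\setminus\{\pi/2\}$, and set $\xi(x,t)=q_0x\sin\theta_++\tfrac12\alpha t\tan\theta_+$. Then $q(x,t)=q_0e^{i\alpha t}\cos\!\big(\theta_+-i\xi(x,t)\big)\,\mathrm{sech}\,\xi(x,t)=q_0e^{i\alpha t}\big(\cos\theta_++i\sin\theta_+\tanh\xi\big)$ and $s(x,t)=\tfrac12 q_0\alpha\sin\theta_+\tan\theta_+\,\mathrm{sech}^2\xi(x,t)$ are smooth (nonsingular) on $\mathbb{R}^2$ and satisfy the nonlocal Sinh-Gordon system $q_{xt}(x,t)+2s(x,t)q(x,t)=0$, $s_x(x,t)=-\partial_t\big(q(x,t)q(-x,-t)\big)$, with $s(-x,-t)=s(x,t)$, $s(x,t)\to0$ as $|x|\to\infty$, and $q(x,t)\to q_0e^{i(\alpha t\pm\theta_+)}$ as $x\to\pm\infty$. *)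

(* Defs.v *)
(* classical reals. Complex-valued functions are represented
   by their real and imaginary parts (no complex library in Stdlib). *)
From Stdlib Require Import Reals.
Open Scope R_scope.

Definition xi (q0 al th x t : R) : R := q0 * x * sin th + / 2 * al * t * tan th.

(* q(x,t) = q0 e^{i al t} (cos th + i sin th tanh xi) *)
Definition q_re (q0 al th x t : R) : R :=
  q0 * (cos (al * t) * cos th - sin (al * t) * (sin th * tanh (xi q0 al th x t))).
Definition q_im (q0 al th x t : R) : R :=
  q0 * (sin (al * t) * cos th + cos (al * t) * (sin th * tanh (xi q0 al th x t))).

Definition s_fun (q0 al th x t : R) : R :=
  / 2 * q0 * al * sin th * tan th * (/ cosh (xi q0 al th x t)) ^ 2.

Definition pq_re (q0 al th x t : R) : R :=
  q_re q0 al th x t * q_re q0 al th (- x) (- t) - q_im q0 al th x t * q_im q0 al th (- x) (- t).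
Definition pq_im (q0 al th x t : R) : R :=
  q_re q0 al th x t * q_im q0 al th (- x) (- t) + q_im q0 al th x t * q_re q0 al th (- x) (- t).

Definition cont2 (f : R -> R -> R) : Prop :=
  forall x t eps, 0 < eps -> exists delta, 0 < delta /\
    forall x' t', Rabs (x' - x) < delta -> Rabs (t' - t) < delta ->
      Rabs (f x' t' - f x t) < eps.

Fixpoint Cn2 (n : nat) (f : R -> R -> R) : Prop :=
  match n with
  | O => cont2 f
  | S m => cont2 f /\ exists fx ft : R -> R -> R,
      (forall x t, derivable_pt_lim (fun y => f y t) x (fx x t)) /\
      (forall x t, derivable_pt_lim (fun u => f x u) t (ft x t)) /\
      Cn2 m fx /\ Cn2 m ft
  end.

Definition smooth2 (f : R -> R -> R) : Prop := forall n, Cn2 n f.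

Definition lim_pinf (g : R -> R) (l : R) : Prop :=
  forall eps, 0 < eps -> exists M, forall x, M < x -> Rabs (g x - l) < eps.
Definition lim_minf (g : R -> R) (l : R) : Prop :=
  forall eps, 0 < eps -> exists M, forall x, x < M -> Rabs (g x - l) < eps.

(* Main.v *)
Require Import Defs.
From Stdlib Require Import Reals Lra FunctionalExtensionality.
Open Scope R_scope.

Lemma dpl_ext (f g : R -> R) x l l' :
  (forall y, f y = g y) -> l = l' -> derivable_pt_lim g x l' -> derivable_pt_lim f x l.
Proof.
  intros H1 H2 H3. replace f with g. subst; exact H3.
  apply functional_extensionality; intro; rewrite H1; reflexivity.
Qed.

Lemma dpl_lin a b x : derivable_pt_lim (fun y => a * y + b) x a.
Proof.
  apply dpl_ext with (g := (mult_real_fct a id + fct_cte b)%F) (l' := a * 1 + 0).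
  - intro; reflexivity.
  - ring.
  - apply derivable_pt_lim_plus. apply derivable_pt_lim_scal, derivable_pt_lim_id.
    apply derivable_pt_lim_const.
Qed.

Lemma cosh_pos x : 0 < cosh x.
Proof. unfold cosh. pose proof (exp_pos x). pose proof (exp_pos (-x)). lra. Qed.

Lemma tanh_u x : tanh x = (exp x ^ 2 - 1) / (exp x ^ 2 + 1).
Proof.
  unfold tanh, sinh, cosh. rewrite exp_Ropp. pose proof (exp_pos x).
  field. split; [|lra]. nra.
Qed.

Lemma one_m_tanh x : 1 - tanh x = 2 / (exp x ^ 2 + 1).
Proof. rewrite tanh_u. pose proof (exp_pos x). field. nra. Qed.

Lemma one_p_tanh x : 1 + tanh x = 2 * exp x ^ 2 / (exp x ^ 2 + 1).
Proof. rewrite tanh_u. pose proof (exp_pos x). field. nra. Qed.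

Lemma tanh_bnd x : 0 <= 1 - tanh x /\ 0 <= 1 + tanh x.
Proof.
  rewrite one_m_tanh, one_p_tanh. pose proof (exp_pos x).
  assert (0 < exp x ^ 2 + 1) by nra.
  assert (0 < / (exp x ^ 2 + 1)) by (apply Rinv_0_lt_compat; lra).
  unfold Rdiv. split; apply Rmult_le_pos; try lra. apply Rmult_le_pos; nra.
Qed.

Lemma tanh_abs x : Rabs (tanh x) <= 1.
Proof. apply Rabs_le. pose proof (tanh_bnd x). lra. Qed.

Lemma sech2 x : (/ cosh x) ^ 2 = 1 - tanh x ^ 2.
Proof.
  unfold tanh, sinh, cosh. rewrite exp_Ropp. pose proof (exp_pos x).
  field. split; [lra|nra].
Qed.

Lemma tanh_odd x : tanh (- x) = - tanh x.
Proof.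
  unfold tanh, sinh, cosh. rewrite Ropp_involutive. pose proof (exp_pos x).
  pose proof (exp_pos (-x)). field. lra.
Qed.

Lemma tanh_deriv x : derivable_pt_lim tanh x (1 - tanh x ^ 2).
Proof.
  apply dpl_ext with (g := (sinh / cosh)%F)
    (l' := (cosh x * cosh x - sinh x * sinh x) / (cosh x)²).
  - intro; reflexivity.
  - rewrite <- sech2. unfold Rsqr. unfold cosh, sinh. rewrite exp_Ropp.
    pose proof (exp_pos x). field. repeat split; try lra; nra.
  - apply derivable_pt_lim_div. apply derivable_pt_lim_sinh.
    apply derivable_pt_lim_cosh. apply Rgt_not_eq, cosh_pos.
Qed.

Lemma tanh_small eps : 0 < eps -> exists Z, forall z, Z < z -> 1 - tanh z < eps.
Proof.
  intros He. exists (2 / eps). intros z Hz.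
  assert (0 < 2/eps) by (apply Rdiv_lt_0_compat; lra).
  rewrite one_m_tanh. pose proof (exp_ineq1 z ltac:(lra)).
  assert (Hu : 1 + 2/eps < exp z) by lra.
  assert (eps * (2/eps) = 2) by (field; lra).
  apply (Rmult_lt_reg_r (exp z ^ 2 + 1)). nra.
  unfold Rdiv. rewrite Rmult_assoc, Rinv_l by nra. nra.
Qed.

Lemma lip (g g' : R -> R) M a b :
  (forall c, derivable_pt_lim g c (g' c)) -> (forall c, Rabs (g' c) <= M) ->
  Rabs (g b - g a) <= M * Rabs (b - a).
Proof.
  intros Hd Hb. destruct (MVT_abs g g' a b) as [c [Hc _]].
  intros; apply Hd. rewrite Hc. apply Rmult_le_compat_r. apply Rabs_pos. apply Hb.
Qed.
Inductive ex := K (r : R) | Cc | Ss | Tt | Pl (a b : ex) | Ml (a b : ex).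

Section Ev.
Variables q0 al th : R.
Definition cx := q0 * sin th.
Definition bt := / 2 * al * tan th.

Fixpoint ev (e : ex) (x t : R) : R :=
  match e with
  | K r => r | Cc => cos (al * t) | Ss => sin (al * t) | Tt => tanh (xi q0 al th x t)
  | Pl a b => ev a x t + ev b x t | Ml a b => ev a x t * ev b x t end.

Definition Sech := Pl (K 1) (Ml (K (-1)) (Ml Tt Tt)).

Fixpoint dx (e : ex) : ex :=
  match e with
  | K _ | Cc | Ss => K 0
  | Tt => Ml (K cx) Sech
  | Pl a b => Pl (dx a) (dx b)
  | Ml a b => Pl (Ml (dx a) b) (Ml a (dx b)) end.

Fixpoint dt (e : ex) : ex :=
  match e with
  | K _ => K 0
  | Cc => Ml (K (- al)) Ss
  | Ss => Ml (K al) Cc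
  | Tt => Ml (K bt) Sech
  | Pl a b => Pl (dt a) (dt b)
  | Ml a b => Pl (Ml (dt a) b) (Ml a (dt b)) end.

Fixpoint bnd (e : ex) : R :=
  match e with
  | K r => Rabs r | Cc | Ss | Tt => 1
  | Pl a b => bnd a + bnd b | Ml a b => bnd a * bnd b end.

Lemma ev_bnd e x t : Rabs (ev e x t) <= bnd e.
Proof.
  induction e; simpl.
  - lra.
  - apply Rabs_le; apply COS_bound.
  - apply Rabs_le; apply SIN_bound.
  - apply tanh_abs.
  - eapply Rle_trans. apply Rabs_triang. lra.
  - rewrite Rabs_mult. apply Rmult_le_compat; auto; apply Rabs_pos.
Qed.

Lemma T_dx x t : derivable_pt_lim (fun y => tanh (xi q0 al th y t)) x (ev (dx Tt) x t).
Proof.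
  apply dpl_ext with (g := comp tanh (fun y => cx * y + bt * t))
    (l' := (1 - tanh (cx * x + bt * t) ^ 2) * cx).
  - intro y. unfold comp, xi, cx, bt. f_equal. ring.
  - simpl. replace (xi q0 al th x t) with (cx * x + bt * t) by (unfold xi, cx, bt; ring). ring.
  - apply derivable_pt_lim_comp. apply dpl_lin. apply tanh_deriv.
Qed.

Lemma T_dt x t : derivable_pt_lim (fun u => tanh (xi q0 al th x u)) t (ev (dt Tt) x t).
Proof.
  apply dpl_ext with (g := comp tanh (fun u => bt * u + cx * x))
    (l' := (1 - tanh (bt * t + cx * x) ^ 2) * bt).
  - intro y. unfold comp, xi, cx, bt. f_equal. ring.
  - simpl. replace (xi q0 al th x t) with (bt * t + cx * x) by (unfold xi, cx, bt; ring). ring.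
  - apply derivable_pt_lim_comp. apply dpl_lin. apply tanh_deriv.
Qed.

Lemma dx_ok e x t : derivable_pt_lim (fun y => ev e y t) x (ev (dx e) x t).
Proof.
  induction e; simpl.
  - apply derivable_pt_lim_const.
  - apply derivable_pt_lim_const.
  - apply derivable_pt_lim_const.
  - apply T_dx.
  - apply (derivable_pt_lim_plus (fun y => ev e1 y t) (fun y => ev e2 y t)); auto.
  - apply (derivable_pt_lim_mult (fun y => ev e1 y t) (fun y => ev e2 y t)); auto.
Qed.

Lemma dt_ok e x t : derivable_pt_lim (fun u => ev e x u) t (ev (dt e) x t).
Proof.
  induction e; simpl.
  - apply derivable_pt_lim_const.
  - apply dpl_ext with (g := comp cos (fun u => al * u + 0)) (l' := - sin (al * t + 0) * al).
    + intro; unfold comp; f_equal; ring.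
    + rewrite Rplus_0_r; ring.
    + apply derivable_pt_lim_comp. apply dpl_lin. apply derivable_pt_lim_cos.
  - apply dpl_ext with (g := comp sin (fun u => al * u + 0)) (l' := cos (al * t + 0) * al).
    + intro; unfold comp; f_equal; ring.
    + rewrite Rplus_0_r; ring.
    + apply derivable_pt_lim_comp. apply dpl_lin. apply derivable_pt_lim_sin.
  - apply T_dt.
  - apply (derivable_pt_lim_plus (fun y => ev e1 x y) (fun y => ev e2 x y)); auto.
  - apply (derivable_pt_lim_mult (fun y => ev e1 x y) (fun y => ev e2 x y)); auto.
Qed.

Lemma cont2_bnd (f fx ft : R -> R -> R) M N :
  (forall x t, derivable_pt_lim (fun y => f y t) x (fx x t)) ->
  (forall x t, derivable_pt_lim (fun u => f x u) t (ft x t)) ->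
  (forall x t, Rabs (fx x t) <= M) -> (forall x t, Rabs (ft x t) <= N) -> cont2 f.
Proof.
  intros Hx Ht Bx By x t eps He.
  assert (HM : 0 <= M) by (eapply Rle_trans; [apply Rabs_pos | apply (Bx 0 0)]).
  assert (HN : 0 <= N) by (eapply Rle_trans; [apply Rabs_pos | apply (By 0 0)]).
  set (P := M + N + 1).
  exists (eps / (2 * P)). split. apply Rdiv_lt_0_compat; unfold P; lra.
  intros x' t' H1 H2.
  assert (E : eps = 2 * P * (eps / (2 * P))) by (field; unfold P; lra).
  set (d := eps / (2 * P)) in *.
  pose proof (lip (fun y => f y t') (fun y => fx y t') M x x' (fun c => Hx c t') (fun c => Bx c t')) as L1.
  pose proof (lip (fun u => f x u) (fun u => ft x u) N t t' (fun c => Ht x c) (fun c => By x c)) as L2.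
  simpl in L1, L2.
  replace (f x' t' - f x t) with ((f x' t' - f x t') + (f x t' - f x t)) by ring.
  eapply Rle_lt_trans. apply Rabs_triang.
  pose proof (Rabs_pos (x' - x)). pose proof (Rabs_pos (t' - t)).
  assert (M * Rabs (x' - x) <= M * d) by (apply Rmult_le_compat_l; lra).
  assert (N * Rabs (t' - t) <= N * d) by (apply Rmult_le_compat_l; lra).
  assert (0 < d) by (unfold d; apply Rdiv_lt_0_compat; unfold P; lra).
  unfold P in E. nra.
Qed.

Lemma cont2_ev e : cont2 (ev e).
Proof.
  apply (cont2_bnd (ev e) (ev (dx e)) (ev (dt e)) (bnd (dx e)) (bnd (dt e))).
  apply dx_ok. apply dt_ok. intros; apply ev_bnd. intros; apply ev_bnd.
Qed.

Lemma Cn2_ev n : forall e, Cn2 n (ev e).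
Proof.
  induction n; intro e; simpl.
  - apply cont2_ev.
  - split. apply cont2_ev. exists (ev (dx e)), (ev (dt e)).
    split. apply dx_ok. split. apply dt_ok. split; apply IHn.
Qed.

End Ev.
Section Main.
Variables q0 al th : R.
Hypothesis hq0 : 0 < q0.
Hypothesis hth : 0 < th < PI.
Hypothesis hth2 : th <> PI / 2.

Definition e_re := Ml (K q0) (Pl (Ml Cc (K (cos th))) (Ml (K (-1)) (Ml Ss (Ml (K (sin th)) Tt)))).
Definition e_im := Ml (K q0) (Pl (Ml Ss (K (cos th))) (Ml Cc (Ml (K (sin th)) Tt))).
Definition e_s := Ml (K (/ 2 * q0 * al * sin th * tan th)) Sech.
Definition e_p := Pl (K (q0 ^ 2 * cos th ^ 2)) (Ml (K (q0 ^ 2 * sin th ^ 2)) (Ml Tt Tt)).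

Lemma re_eq : q_re q0 al th = ev q0 al th e_re.
Proof. do 2 (apply functional_extensionality; intro). unfold q_re; simpl; ring. Qed.
Lemma im_eq : q_im q0 al th = ev q0 al th e_im.
Proof. do 2 (apply functional_extensionality; intro). unfold q_im; simpl; ring. Qed.
Lemma s_eq : s_fun q0 al th = ev q0 al th e_s.
Proof. do 2 (apply functional_extensionality; intro). unfold s_fun. rewrite sech2; simpl; ring. Qed.

Lemma xi_neg x t : xi q0 al th (- x) (- t) = - xi q0 al th x t.
Proof. unfold xi; ring. Qed.

Lemma pre_eq x u : pq_re q0 al th x u = ev q0 al th e_p x u.
Proof.
  unfold pq_re, q_re, q_im; simpl. rewrite xi_neg, tanh_odd.
  replace (al * - u) with (- (al * u)) by ring. rewrite cos_neg, sin_neg.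
  pose proof (sin2_cos2 (al * u)) as H. unfold Rsqr in H.
  set (C := cos (al * u)) in *. set (S := sin (al * u)) in *.
  set (T := tanh (xi q0 al th x u)).
  transitivity (q0 ^ 2 * (S * S + C * C) * (cos th ^ 2 + sin th ^ 2 * T ^ 2)). ring.
  rewrite H; ring.
Qed.

Lemma pim_eq x u : pq_im q0 al th x u = 0.
Proof.
  unfold pq_im, q_re, q_im. rewrite xi_neg, tanh_odd.
  replace (al * - u) with (- (al * u)) by ring. rewrite cos_neg, sin_neg. ring.
Qed.

Lemma costh : cos th <> 0.
Proof.
  destruct (Rtotal_order th (PI / 2)) as [H|[H|H]].
  - apply Rgt_not_eq, cos_gt_0; lra.
  - contradiction.
  - apply Rlt_not_eq, cos_lt_0; lra.
Qed.

Lemma sinth : 0 < sin th.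
Proof. apply sin_gt_0; lra. Qed.

Lemma pde_re x t : ev q0 al th (dt al th (dx q0 th e_re)) x t + 2 * s_fun q0 al th x t * q_re q0 al th x t = 0.
Proof.
  pose proof costh. unfold s_fun, q_re. rewrite sech2; simpl. unfold cx, bt, tan. field. auto.
Qed.
Lemma pde_im x t : ev q0 al th (dt al th (dx q0 th e_im)) x t + 2 * s_fun q0 al th x t * q_im q0 al th x t = 0.
Proof.
  pose proof costh. unfold s_fun, q_im. rewrite sech2; simpl. unfold cx, bt, tan. field. auto.
Qed.
Lemma sx_eq x t : ev q0 al th (dx q0 th e_s) x t = - ev q0 al th (dt al th e_p) x t.
Proof. pose proof costh. simpl. unfold cx, bt, tan. field. auto. Qed.

Lemma s_sym x t : s_fun q0 al th (- x) (- t) = s_fun q0 al th x t.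
Proof. unfold s_fun. rewrite !sech2, xi_neg, tanh_odd. ring. Qed.

Lemma cx_pos : 0 < cx q0 th.
Proof. unfold cx. pose proof sinth. nra. Qed.

Lemma lim_help eps K : 0 < eps -> 0 <= K -> forall d, 0 <= d -> d < eps / (K + 1) -> K * d < eps.
Proof.
  intros He HK d Hd Hd2.
  assert (K * d <= K * (eps / (K + 1))) by (apply Rmult_le_compat_l; lra).
  assert (eps - K * (eps / (K + 1)) = eps / (K + 1)) by (field; lra).
  assert (0 < eps / (K + 1)) by (apply Rdiv_lt_0_compat; lra). lra.
Qed.

Lemma limp (g : R -> R) L Kc t : 0 <= Kc ->
  (forall x, Rabs (g x - L) <= Kc * (1 - tanh (xi q0 al th x t))) -> lim_pinf g L.
Proof.
  intros HK Hg eps He.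
  assert (He' : 0 < eps / (Kc + 1)) by (apply Rdiv_lt_0_compat; lra).
  destruct (tanh_small _ He') as [Z HZ].
  pose proof cx_pos as Hc.
  exists ((Z - bt al th * t) / cx q0 th). intros x Hx.
  assert (Hxi : Z < xi q0 al th x t).
  { replace (xi q0 al th x t) with (cx q0 th * x + bt al th * t) by (unfold xi, cx, bt; ring).
    apply (Rmult_lt_compat_l (cx q0 th)) in Hx; auto.
    replace (cx q0 th * ((Z - bt al th * t) / cx q0 th)) with (Z - bt al th * t) in Hx
      by (field; lra). lra. }
  eapply Rle_lt_trans. apply Hg. apply lim_help; auto. apply tanh_bnd.
Qed.

Lemma limm (g : R -> R) L Kc t : 0 <= Kc ->
  (forall x, Rabs (g x - L) <= Kc * (1 + tanh (xi q0 al th x t))) -> lim_minf g L.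
Proof.
  intros HK Hg eps He.
  assert (He' : 0 < eps / (Kc + 1)) by (apply Rdiv_lt_0_compat; lra).
  destruct (tanh_small _ He') as [Z HZ].
  pose proof cx_pos as Hc.
  exists ((- Z - bt al th * t) / cx q0 th). intros x Hx.
  assert (Hxi : Z < - xi q0 al th x t).
  { replace (xi q0 al th x t) with (cx q0 th * x + bt al th * t) by (unfold xi, cx, bt; ring).
    apply (Rmult_lt_compat_l (cx q0 th)) in Hx; auto.
    replace (cx q0 th * ((- Z - bt al th * t) / cx q0 th)) with (- Z - bt al th * t) in Hx
      by (field; lra). lra. }
  eapply Rle_lt_trans. apply Hg. apply lim_help; auto.
  pose proof (tanh_bnd (xi q0 al th x t)); lra.
  pose proof (HZ _ Hxi). rewrite tanh_odd in H. lra.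
Qed.

Lemma ab4 k u v w : 0 <= k -> 0 <= w -> Rabs u <= 1 -> Rabs v <= 1 -> Rabs (k * u * v * w) <= k * w.
Proof.
  intros. rewrite !Rabs_mult, (Rabs_pos_eq k), (Rabs_pos_eq w) by auto.
  pose proof (Rabs_pos u). pose proof (Rabs_pos v).
  assert (Rabs u * Rabs v <= 1 * 1) by (apply Rmult_le_compat; auto).
  replace (k * Rabs u * Rabs v * w) with ((Rabs u * Rabs v) * (k * w)) by ring.
  replace (k * w) with (1 * 1 * (k * w)) at 2 by ring.
  apply Rmult_le_compat_r. apply Rmult_le_pos; auto. auto.
Qed.

Lemma sabs x : Rabs (sin x) <= 1. Proof. apply Rabs_le, SIN_bound. Qed.
Lemma cabs x : Rabs (cos x) <= 1. Proof. apply Rabs_le, COS_bound. Qed.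
Lemma nsabs : Rabs (- sin th) <= 1. Proof. rewrite Rabs_Ropp; apply sabs. Qed.

End Main.

Theorem mainTheorem9 (q0 al th : R)
  (hq0 : 0 < q0) (hth : 0 < th < PI) (hth2 : th <> PI / 2) :
  (* smoothness of q (both components) and s on R^2 *)
  smooth2 (q_re q0 al th) /\ smooth2 (q_im q0 al th) /\ smooth2 (s_fun q0 al th) /\
  (* q_xt + 2 s q = 0 *)
  (exists qx_re qx_im qxt_re qxt_im : R -> R -> R,
     (forall x t, derivable_pt_lim (fun y => q_re q0 al th y t) x (qx_re x t)) /\
     (forall x t, derivable_pt_lim (fun y => q_im q0 al th y t) x (qx_im x t)) /\
     (forall x t, derivable_pt_lim (fun u => qx_re x u) t (qxt_re x t)) /\
     (forall x t, derivable_pt_lim (fun u => qx_im x u) t (qxt_im x t)) /\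
     (forall x t, qxt_re x t + 2 * s_fun q0 al th x t * q_re q0 al th x t = 0) /\
     (forall x t, qxt_im x t + 2 * s_fun q0 al th x t * q_im q0 al th x t = 0)) /\
  (* s_x = - d/dt (q(x,t) q(-x,-t))  (s is real) *)
  (exists sx pt_re pt_im : R -> R -> R,
     (forall x t, derivable_pt_lim (fun y => s_fun q0 al th y t) x (sx x t)) /\
     (forall x t, derivable_pt_lim (fun u => pq_re q0 al th x u) t (pt_re x t)) /\
     (forall x t, derivable_pt_lim (fun u => pq_im q0 al th x u) t (pt_im x t)) /\
     (forall x t, sx x t = - pt_re x t) /\
     (forall x t, 0 = - pt_im x t)) /\
  (* symmetry of s *)
  (forall x t, s_fun q0 al th (- x) (- t) = s_fun q0 al th x t) /\
  (* decay of s as |x| -> oo *)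
  (forall t, lim_pinf (fun x => s_fun q0 al th x t) 0 /\
             lim_minf (fun x => s_fun q0 al th x t) 0) /\
  (* boundary values of q as x -> +oo / -oo *)
  (forall t,
     lim_pinf (fun x => q_re q0 al th x t) (q0 * cos (al * t + th)) /\
     lim_pinf (fun x => q_im q0 al th x t) (q0 * sin (al * t + th)) /\
     lim_minf (fun x => q_re q0 al th x t) (q0 * cos (al * t - th)) /\
     lim_minf (fun x => q_im q0 al th x t) (q0 * sin (al * t - th))).
Proof.
  pose proof (sinth th hth) as Hs.
  split. rewrite (re_eq q0 al th). intro n; apply Cn2_ev.
  split. rewrite (im_eq q0 al th). intro n; apply Cn2_ev.
  split. rewrite (s_eq q0 al th). intro n; apply Cn2_ev.
  split.
  { exists (ev q0 al th (dx q0 th (e_re q0 th))), (ev q0 al th (dx q0 th (e_im q0 th))),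
      (ev q0 al th (dt al th (dx q0 th (e_re q0 th)))), (ev q0 al th (dt al th (dx q0 th (e_im q0 th)))).
    rewrite (re_eq q0 al th), (im_eq q0 al th).
    split. intros; apply dx_ok. split. intros; apply dx_ok.
    split. intros; apply dt_ok. split. intros; apply dt_ok.
    rewrite <- (re_eq q0 al th), <- (im_eq q0 al th).
    split; intros. apply pde_re; auto. apply pde_im; auto. }
  split.
  { exists (ev q0 al th (dx q0 th (e_s q0 al th))), (ev q0 al th (dt al th (e_p q0 th))), (fun _ _ => 0).
    split. rewrite (s_eq q0 al th). intros; apply dx_ok.
    split. intros. apply dpl_ext with (g := fun u => ev q0 al th (e_p q0 th) x u) (l' := ev q0 al th (dt al th (e_p q0 th)) x t).
      intro; apply pre_eq. reflexivity. apply dt_ok.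
    split. intros. apply dpl_ext with (g := fct_cte 0) (l' := 0).
      intro; apply pim_eq. reflexivity. apply derivable_pt_lim_const.
    split. intros; apply sx_eq; auto. intros; ring. }
  split. intros; apply s_sym.
  split.
  { intro t. set (k := / 2 * q0 * al * sin th * tan th).
    split.
    - apply (limp q0 al th hq0 hth _ _ (2 * Rabs k) t). pose proof (Rabs_pos k); lra.
      intro x. unfold s_fun. rewrite sech2. fold k.
      pose proof (tanh_bnd (xi q0 al th x t)). set (T := tanh (xi q0 al th x t)) in *.
      replace (k * (1 - T ^ 2) - 0) with (k * ((1 + T) * (1 - T))) by ring.
      rewrite Rabs_mult, (Rabs_pos_eq ((1 + T) * (1 - T))) by nra.
      pose proof (Rabs_pos k). assert (1 + T <= 2) by lra.
      replace (2 * Rabs k * (1 - T)) with (Rabs k * (2 * (1 - T))) by ring.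
      apply Rmult_le_compat_l; auto. apply Rmult_le_compat_r; lra.
    - apply (limm q0 al th hq0 hth _ _ (2 * Rabs k) t). pose proof (Rabs_pos k); lra.
      intro x. unfold s_fun. rewrite sech2. fold k.
      pose proof (tanh_bnd (xi q0 al th x t)). set (T := tanh (xi q0 al th x t)) in *.
      replace (k * (1 - T ^ 2) - 0) with (k * ((1 + T) * (1 - T))) by ring.
      rewrite Rabs_mult, (Rabs_pos_eq ((1 + T) * (1 - T))) by nra.
      pose proof (Rabs_pos k). assert (1 - T <= 2) by lra.
      replace (2 * Rabs k * (1 + T)) with (Rabs k * ((1 + T) * 2)) by ring.
      apply Rmult_le_compat_l; auto. apply Rmult_le_compat_l; lra. }
  intro t. split; [|split; [|split]].
  - apply (limp q0 al th hq0 hth _ _ q0 t). lra. intro x.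
    pose proof (tanh_bnd (xi q0 al th x t)).
    unfold q_re. rewrite cos_plus.
    replace (q0 * (cos (al * t) * cos th - sin (al * t) * (sin th * tanh (xi q0 al th x t))) -
      q0 * (cos (al * t) * cos th - sin (al * t) * sin th)) with
      (q0 * sin (al * t) * sin th * (1 - tanh (xi q0 al th x t))) by ring.
    apply ab4; try lra; apply sabs.
  - apply (limp q0 al th hq0 hth _ _ q0 t). lra. intro x.
    pose proof (tanh_bnd (xi q0 al th x t)).
    unfold q_im. rewrite sin_plus.
    replace (q0 * (sin (al * t) * cos th + cos (al * t) * (sin th * tanh (xi q0 al th x t))) -
      q0 * (sin (al * t) * cos th + cos (al * t) * sin th)) with
      (q0 * cos (al * t) * (- sin th) * (1 - tanh (xi q0 al th x t))) by ring.
    apply ab4; try lra. apply cabs. apply nsabs.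
  - apply (limm q0 al th hq0 hth _ _ q0 t). lra. intro x.
    pose proof (tanh_bnd (xi q0 al th x t)).
    unfold q_re. rewrite cos_minus.
    replace (q0 * (cos (al * t) * cos th - sin (al * t) * (sin th * tanh (xi q0 al th x t))) -
      q0 * (cos (al * t) * cos th + sin (al * t) * sin th)) with
      (q0 * sin (al * t) * (- sin th) * (1 + tanh (xi q0 al th x t))) by ring.
    apply ab4; try lra. apply sabs. apply nsabs.
  - apply (limm q0 al th hq0 hth _ _ q0 t). lra. intro x.
    pose proof (tanh_bnd (xi q0 al th x t)).
    unfold q_im. rewrite sin_minus.
    replace (q0 * (sin (al * t) * cos th + cos (al * t) * (sin th * tanh (xi q0 al th x t))) -
      q0 * (sin (al * t) * cos th - cos (al * t) * sin th)) with
      (q0 * cos (al * t) * sin th * (1 + tanh (xi q0 al th x t))) by ring.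
    apply ab4; try lra. apply cabs. apply sabs.
Qed.
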